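(* Let $n,k\ge0$ be integers and assume the numbers $\alpha_i+im$, $i=0,\ldots,k$, are pairwise distinct. Then $$L_{m,\bar{\alpha}}(n,k)=\sum_{j=0}^{k}\frac{\prod_{i=0}^{n-1}(\alpha_j+jm+\alpha_i+im)}{\prod_{i=0,\,i\ne j}^{k}(\alpha_j+jm-\alpha_i-im)}.$$ Moreover, for all integers $n\ge k\ge1$, $$L_{m,\bar{\alpha}}(n,k)=\sum_{j=k}^{n}L_{m,\bar{\alpha}}(j-1,k-1)\prod_{i=j}^{n-1}(\alpha_i+im+\alpha_k+km).$$
   Context: Fix a real number $m$ and a sequence $\bar{\alpha}=(\alpha_0,\alpha_1,\ldots)$ of real numbers. Let $(x;\bar{\alpha}|m)_n=\prod_{j=0}^{n-1}(x-\alpha_j-jm)$, with $(x;\bar{\alpha}|m)_0=1$. The $\bar{\alpha}$-Whitney numbers of the first kind $w_{m,\bar{\alpha}}(n,k)$ and second kind $W_{m,\bar{\alpha}}(n,k)$ are defined by the polynomial identities $(x;\bar{\alpha}|m)_n=\sum_{k=0}^n w_{m,\bar{\alpha}}(n,k)x^k$ and $x^n=\sum_{k=0}^n W_{m,\bar{\alpha}}(n,k)(x;\bar{\alpha}|m)_k$, both vanishing for $k>n$ or $k<0$. The $\bar{\alpha}$-Whitney-Lah numbers are $$L_{m,\bar{\alpha}}(n,k)=\sum_{j=k}^{n}(-1)^{n-j}\,w_{m,\bar{\alpha}}(n,j)\,W_{m,\bar{\alpha}}(j,k),$$ with $L_{m,\bar{\alpha}}(0,0)=1$ and $L_{m,\bar{\alpha}}(n,k)=0$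 for $n<k$ or $k<0$. Empty products equal $1$. *)

(* Defs.v *)
(* Real parameters m, alpha are taken in an arbitrary
   realFieldType R (the statement is purely algebraic). *)
From HB Require Import structures.
From mathcomp Require Import all_boot all_order all_algebra.
Set Implicit Arguments. Unset Strict Implicit. Unset Printing Implicit Defensive.
Import Order.TTheory GRing.Theory Num.Theory.
Local Open Scope ring_scope.

Definition wbeta (R : ringType) (m : R) (alpha : nat -> R) (i : nat) : R :=
  alpha i + i%:R * m.

Definition gfall (R : comRingType) (m : R) (alpha : nat -> R) (n : nat) : {poly R} :=
  \prod_(j < n) ('X - (wbeta m alpha j)%:P).

Definition wfirst (R : comRingType) (m : R) (alpha : nat -> R) (n k : nat) : R :=
  (gfall m alpha n)`_k.

Definition is_wsecond (R : comRingType) (m : R) (alpha : nat -> R) (W : nat -> nat -> R) : Prop :=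
  (forall n k, (n < k)%N -> W n k = 0) /\
  (forall n, 'X^n = \sum_(k < n.+1) W n k *: gfall m alpha k).

Definition wlah (R : comRingType) (m : R) (alpha : nat -> R) (W : nat -> nat -> R) (n k : nat) : R :=
  \sum_(k <= j < n.+1) (-1) ^+ (n - j) * wfirst m alpha n j * W j k.

(* Main.v *)
Require Import Defs.
From HB Require Import structures.
From mathcomp Require Import all_boot all_order all_algebra.
Import Order.TTheory GRing.Theory Num.Theory.
Local Open Scope ring_scope.
From mathcomp Require Import ring.
Set Implicit Arguments. Unset Strict Implicit. Unset Printing Implicit Defensive.


Definition NP (R : fieldType) (b : nat -> R) (k : nat) : {poly R} :=
  \prod_(j < k) ('X - (b j)%:P).

Lemma NP_monic (R : fieldType) (b : nat -> R) k : NP b k \is monic.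
Proof. exact: monic_prod_XsubC. Qed.

Lemma size_NP (R : fieldType) (b : nat -> R) k : size (NP b k) = k.+1.
Proof.
elim: k => [|k IH]; first by rewrite /NP big_ord0 size_poly1.
rewrite /NP big_ord_recr /= size_Mmonic ?monicXsubC ?size_XsubC ?addn2 -/(NP b k) ?IH //.
by rewrite monic_neq0 // NP_monic.
Qed.

Lemma NP_coef_top (R : fieldType) (b : nat -> R) k : (NP b k)`_k = 1.
Proof.
have := NP_monic b k; move/monicP; rewrite /lead_coef size_NP //.
Qed.

Lemma NP_unique (R : fieldType) (b : nat -> R) N (c : nat -> R) :
  \sum_(k < N) c k *: NP b k = 0 -> forall k, (k < N)%N -> c k = 0.
Proof.
elim: N => [|N IH] H k Hk; first by [].
move: H; rewrite big_ord_recr /= => H.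
have HN : c N = 0.
  have := congr1 (fun p : {poly R} => p`_N) H.
  rewrite coefD coef_sum coefZ NP_coef_top mulr1 coef0 big1 ?add0r //.
  move=> i _; rewrite coefZ; apply/eqP; rewrite mulf_eq0; apply/orP; right.
  by apply/eqP; apply: (leq_sizeP _ _ _ _ (leqnn _)); rewrite size_NP.
move: H; rewrite HN scale0r addr0 => H.
have [->|kN] := eqVneq k N; first by [].
by apply: IH => //; rewrite ltn_neqAle kN -ltnS.
Qed.


Definition ell (R : fieldType) (b : nat -> R) k (j : 'I_k.+1) : {poly R} :=
  \prod_(i < k.+1 | i != j) ('X - (b i)%:P).

Lemma size_ell (R : fieldType) (b : nat -> R) k (j : 'I_k.+1) : size (ell b j) = k.+1.
Proof.
have := size_NP b k.+1; rewrite /NP (bigD1 j) //= -/(ell b j).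
rewrite size_monicM ?monicXsubC ?size_XsubC //.
  by move=> [].
by rewrite monic_neq0 // monic_prod_XsubC.
Qed.

Lemma ell_coef_top (R : fieldType) (b : nat -> R) k (j : 'I_k.+1) : (ell b j)`_k = 1.
Proof.
have /monicP := monic_prod_XsubC (index_enum 'I_k.+1) (fun i : 'I_k.+1 => i != j) (fun i : 'I_k.+1 => b i).
by rewrite /lead_coef -/(ell b j) size_ell.
Qed.

Lemma lagrange_dd (R : fieldType) (b : nat -> R) k (p : {poly R}) :
  (forall i j : nat, (i <= k)%N -> (j <= k)%N -> i <> j -> b i <> b j) ->
  (size p <= k.+1)%N ->
  \sum_(j < k.+1) p.[b j] / \prod_(i < k.+1 | i != j) (b j - b i) = p`_k.
Proof.
move=> Hd Hs.
set d := fun j : 'I_k.+1 => \prod_(i < k.+1 | i != j) (b j - b i).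
have dnz : forall j, d j != 0.
  move=> j; apply/prodf_neq0 => i ij; rewrite subr_eq0; apply/eqP.
  apply: Hd; [by rewrite -ltnS ltn_ord | by rewrite -ltnS ltn_ord |].
  by move=> E; move/eqP: ij; apply; apply: val_inj.
have ellev : forall (j l : 'I_k.+1), (ell b j).[b l] = if l == j then d j else 0.
  move=> j l; rewrite /ell horner_prod.
  have [->|lj] := eqVneq l j.
    by apply: eq_bigr => i _; rewrite hornerXsubC.
  rewrite (bigD1 l) //= hornerXsubC subrr mul0r //.
set q := \sum_(j < k.+1) (p.[b j] / d j) *: ell b j.
have qev : forall l : 'I_k.+1, q.[b l] = p.[b l].
  move=> l; rewrite horner_sum (bigD1 l) //= big1 ?addr0.
    by rewrite hornerZ ellev eqxx mulfVK.
  by move=> j lj; rewrite hornerZ ellev eq_sym (negbTE lj) mulr0.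
have sq : (size q <= k.+1)%N.
  apply: (big_ind (fun r : {poly R} => (size r <= k.+1)%N)).
  - by rewrite size_poly0.
  - by move=> x y Hx Hy; apply: leq_trans (size_polyD _ _) _; rewrite geq_max Hx Hy.
  - by move=> j _; apply: leq_trans (size_scale_leq _ _) _; rewrite size_ell.
have qp : q = p.
  apply/eqP; rewrite -subr_eq0; apply/negPn/negP => nz.
  have := max_poly_roots nz (rs := [seq b (val i) | i <- enum 'I_k.+1]).
  rewrite size_map size_enum_ord.
  have -> : all (root (q - p)) [seq b (val i) | i <- enum 'I_k.+1].
    by apply/allP => x /mapP [i _ ->]; rewrite rootE hornerD hornerN qev subrr.
  have -> : uniq [seq b (val i) | i <- enum 'I_k.+1].
    rewrite map_inj_uniq ?enum_uniq // => i j E; apply/eqP/negPn/negP => ij.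
    apply: (Hd i j _ _ _ E); [by rewrite -ltnS ltn_ord | by rewrite -ltnS ltn_ord |].
    by move=> E'; move/eqP: ij; apply; apply: val_inj.
  move=> /(_ isT isT); rewrite ltnNge.
  by apply/negP/negPn; apply: leq_trans (size_polyD _ _) _; rewrite size_polyN geq_max sq Hs.
rewrite -[in RHS]qp coef_sum; apply: eq_bigr => j _.
by rewrite coefZ ell_coef_top mulr1.
Qed.


Definition PP (R : fieldType) (b : nat -> R) (n : nat) : {poly R} :=
  \prod_(i < n) ('X + (b i)%:P).

Lemma NP_coef_big (R : fieldType) (b : nat -> R) n j : (n < j)%N -> (NP b n)`_j = 0.
Proof. by move=> H; apply: (leq_sizeP _ _ _ _ (leqnn _)); rewrite size_NP. Qed.

Lemma PP_coef (R : fieldType) (b : nat -> R) n j :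
  (PP b n)`_j = (-1) ^+ (n - j) * (NP b n)`_j.
Proof.
elim: n j => [|n IH] j.
  by rewrite /PP /NP !big_ord0 sub0n expr0 mul1r.
rewrite /PP /NP !big_ord_recr /= -/(PP b n) -/(NP b n).
rewrite mulrDr mulrBr coefD coefB !coefMX !coefMC.
case: j => [|j] /=.
  by rewrite IH !subn0 exprS !add0r; ring.
rewrite !IH subSS.
have [jn|nj] := ltnP j n.
  rewrite (_ : (n - j)%N = (n - j.+1).+1)%N; last by rewrite subnSK.
  by rewrite exprS; ring.
by rewrite (@NP_coef_big _ _ _ j.+1) ?ltnS //; ring.
Qed.


Lemma size_PP (R : fieldType) (b : nat -> R) k : size (PP b k) = k.+1.
Proof.
elim: k => [|k IH]; first by rewrite /PP big_ord0 size_poly1.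
rewrite /PP big_ord_recr /= size_Mmonic ?monicXaddC ?size_XaddC ?addn2 -/(PP b k) ?IH //.
by rewrite monic_neq0 // monic_prod // => i _; apply: monicXaddC.
Qed.

Definition Lah (R : fieldType) (b : nat -> R) (W : nat -> nat -> R) n k :=
  \sum_(k <= j < n.+1) (-1) ^+ (n - j) * (NP b n)`_j * W j k.

Lemma PP_expand (R : fieldType) (b : nat -> R) (W : nat -> nat -> R) :
  (forall n k, (n < k)%N -> W n k = 0) ->
  (forall n, 'X^n = \sum_(k < n.+1) W n k *: NP b k) ->
  forall n, PP b n = \sum_(k < n.+1) Lah b W n k *: NP b k.
Proof.
move=> W0 WX n.
rewrite -[LHS]coefK size_PP poly_def.
transitivity (\sum_(j < n.+1) \sum_(k < n.+1) ((PP b n)`_j * W j k) *: NP b k).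
  apply: eq_bigr => j _; rewrite WX scaler_sumr.
  rewrite (big_ord_widen n.+1 (fun k => (PP b n)`_j *: (W j k *: NP b k))) //.
  rewrite big_mkcond; apply: eq_bigr => k _.
  case: (ltnP k j.+1) => [_|jk]; first by rewrite scalerA.
  by rewrite W0 // mulr0 scale0r.
rewrite exchange_big; apply: eq_bigr => k _; rewrite -scaler_suml; congr (_ *: _).
rewrite /Lah -(big_mkord xpredT (fun j => (PP b n)`_j * W j k)).
rewrite (big_cat_nat (n := k)) //=; last by apply: ltnW.
rewrite big_nat big1 ?add0r.
  by apply: eq_bigr => j _; rewrite PP_coef.
by move=> j /andP [_ jk]; rewrite W0 // mulr0.
Qed.


Lemma Lah_big (R : fieldType) (b : nat -> R) W n k : (n < k)%N -> Lah b W n k = 0.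
Proof. by move=> H; rewrite /Lah big_geq. Qed.

Lemma Lah_rec (R : fieldType) (b : nat -> R) (W : nat -> nat -> R) :
  (forall n k, (n < k)%N -> W n k = 0) ->
  (forall n, 'X^n = \sum_(k < n.+1) W n k *: NP b k) ->
  forall n k, Lah b W n.+1 k.+1 = Lah b W n k + (b k.+1 + b n) * Lah b W n k.+1.
Proof.
move=> W0 WX n k.
have [kn|nk] := leqP k n; last first.
  by rewrite !Lah_big ?mulr0 ?addr0 // ltnW.
pose c := fun k => (if k is k'.+1 then Lah b W n k' else 0) + (b k + b n) * Lah b W n k.
have E : \sum_(k < n.+2) (Lah b W n.+1 k - c k) *: NP b k = 0.
  under eq_bigr do rewrite scalerBl.
  rewrite sumrB -PP_expand //; apply/eqP; rewrite subr_eq0; apply/eqP.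
  rewrite /PP big_ord_recr /= -/(PP b n) (PP_expand W0 WX) mulr_suml.
  rewrite /c; under eq_bigr do rewrite scalerDl.
  rewrite big_split /= [in RHS](big_ord_recl n.+1) /= scale0r add0r.
  rewrite [in RHS](big_ord_recr n.+1) /= (@Lah_big _ b W n n.+1) // mulr0 scale0r addr0.
  rewrite -big_split /=; apply: eq_bigr => i _.
  rewrite /NP big_ord_recr /= -/(NP b i) add0n -!mul_polyC polyCM polyCD; ring.
have := @NP_unique _ b n.+2 (fun i => Lah b W n.+1 i - c i) E k.+1; rewrite !ltnS => /(_ kn) /eqP.
by rewrite subr_eq0 /c => /eqP.
Qed.


Lemma Lah_claim2 (R : fieldType) (b : nat -> R) (W : nat -> nat -> R) :
  (forall n k, (n < k)%N -> W n k = 0) ->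
  (forall n, 'X^n = \sum_(k < n.+1) W n k *: NP b k) ->
  forall n k, Lah b W n k.+1 =
    \sum_(k.+1 <= j < n.+1) Lah b W j.-1 k * \prod_(j <= i < n) (b i + b k.+1).
Proof.
move=> W0 WX n k; elim: n => [|n IH].
  by rewrite Lah_big // big_geq.
have [kn|nk] := leqP k.+1 n.+1; last first.
  by rewrite Lah_big // big_geq.
rewrite (Lah_rec W0 WX) big_nat_recr //= [in Lah b W n k * _]big_geq // mulr1 addrC; congr (_ + _).
rewrite IH mulr_sumr; apply: eq_big_nat => j /andP [kj jn].
rewrite big_nat_recr /=; last by rewrite -ltnS.
by ring.
Qed.


Lemma NP_eval0 (R : fieldType) (b : nat -> R) l j : (j < l)%N -> (NP b l).[b j] = 0.
Proof.
move=> jl; rewrite /NP horner_prod (bigD1 (Ordinal jl)) //= hornerXsubC subrr mul0r //.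
Qed.

Lemma DD_NP (R : fieldType) (b : nat -> R) k l :
  (forall i j : nat, (i <= k)%N -> (j <= k)%N -> i <> j -> b i <> b j) ->
  \sum_(j < k.+1) (NP b l).[b j] / \prod_(i < k.+1 | i != j) (b j - b i) = (l == k)%:R.
Proof.
move=> Hd; have [lk|kl] := leqP l k.
  rewrite lagrange_dd //; last by rewrite size_NP.
  have [->|lk'] := eqVneq l k; first by rewrite NP_coef_top.
  by rewrite NP_coef_big // ltn_neqAle lk' lk.
rewrite gtn_eqF // big1 // => j _; rewrite NP_eval0 ?mul0r //.
by apply: leq_trans kl; rewrite ltnS -ltnS ltn_ord.
Qed.

Lemma Lah_claim1 (R : fieldType) (b : nat -> R) (W : nat -> nat -> R) :
  (forall n k, (n < k)%N -> W n k = 0) ->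
  (forall n, 'X^n = \sum_(k < n.+1) W n k *: NP b k) ->
  forall n k,
  (forall i j : nat, (i <= k)%N -> (j <= k)%N -> i <> j -> b i <> b j) ->
  Lah b W n k = \sum_(j < k.+1)
          (\prod_(i < n) (b j + b i)) / (\prod_(i < k.+1 | i != j) (b j - b i)).
Proof.
move=> W0 WX n k Hd.
transitivity (\sum_(j < k.+1) (PP b n).[b j] / (\prod_(i < k.+1 | i != j) (b j - b i))); last first.
  apply: eq_bigr => j _; congr (_ / _); rewrite /PP horner_prod.
  by apply: eq_bigr => i _; rewrite hornerD hornerX hornerC.
rewrite (PP_expand W0 WX).
under eq_bigr do rewrite horner_sum mulr_suml.
rewrite exchange_big /=.
under eq_bigr do (under eq_bigr do rewrite hornerZ -mulrA; rewrite -mulr_sumr DD_NP //).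
have [kn|nk] := ltnP k n.+1.
  rewrite (bigD1 (Ordinal kn)) //= eqxx mulr1 big1 ?addr0 // => l lk.
  by rewrite eqE /= in lk; rewrite (negbTE lk) mulr0.
rewrite Lah_big // big1 // => l _; rewrite eqn_leq.
by rewrite (ltn_geF (leq_trans (ltn_ord l) nk)) andbF mulr0.
Qed.

Theorem mainTheorem11 (R : realFieldType) (m : R) (alpha : nat -> R)
    (W : nat -> nat -> R) (HW : is_wsecond m alpha W) :
  (forall n k : nat,
     (forall i j : nat, (i <= k)%N -> (j <= k)%N -> i <> j ->
        wbeta m alpha i <> wbeta m alpha j) ->
     wlah m alpha W n k =
       \sum_(j < k.+1)
          (\prod_(i < n) (wbeta m alpha j + wbeta m alpha i)) /
          (\prod_(i < k.+1 | i != j) (wbeta m alpha j - wbeta m alpha i)))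
  /\
  (forall n k : nat, (1 <= k)%N -> (k <= n)%N ->
     wlah m alpha W n k =
       \sum_(k <= j < n.+1)
          wlah m alpha W j.-1 k.-1 *
          \prod_(j <= i < n) (wbeta m alpha i + wbeta m alpha k)).
Proof.
case: HW => W0 WX; split.
  move=> n k Hd; exact: (@Lah_claim1 R (wbeta m alpha) W W0 WX n k Hd).
move=> n k; case: k => [//|k] _ _.
exact: (@Lah_claim2 R (wbeta m alpha) W W0 WX n k).
Qed.
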